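(* Let $G_1$ be a graph on $n$ nodes with Laplacian $Q_1$, and for $p\ge 0$ let $$Q(p)=\begin{bmatrix} Q_1+p(n-1)I & -p(J-I)\\ -p(J-I) & Q_1+p(n-1)I\end{bmatrix},$$ where $J$ is the $n\times n$ all-one matrix (two copies of $G_1$ coupled by an $(n-1)$-to-$(n-1)$ interconnection $B=p(J-I)$), with eigenvalues $0=\mu_N(p)\le\mu_{N-1}(p)\le\dots\le\mu_1(p)$, $N=2n$. Define $p^*=\sup\big(\{0\}\cup\{p>0:\ \mu_{N-1}(p)=2(n-1)p\}\big)$. Then $$p^*=\frac{\mu_{n-1}(Q_1)}{n},$$ where $\mu_{n-1}(Q_1)$ is the second smallest eigenvalue of $Q_1$.
   Context: $2(n-1)p$ is an eigenvalue of $Q(p)$ with eigenvector $[u^T,-u^T]^T$, $u$ the all-one vector; $p^*$ is the structural transition threshold, described in the paper as the coupling beyond which the algebraic connectivity $\mu_{N-1}$ no longer equals $2(n-1)p$ (formalized here as the supremum). *)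

(* Defs.v *)
From HB Require Import structures.
From mathcomp Require Import all_boot all_order all_algebra.
From mathcomp Require Import boolp classical_sets reals.
Set Implicit Arguments. Unset Strict Implicit. Unset Printing Implicit Defensive.
Import Order.TTheory GRing.Theory Num.Theory.
Local Open Scope ring_scope.

Definition laplacian (R : realType) (n : nat) (adj : rel 'I_n) : 'M[R]_n :=
  \matrix_(i, j) (if i == j then (#|[set k | adj i k]|)%:R
                  else if adj i j then -1 else 0).

(* The eigenvalues of a square matrix, listed in ascending order with
   multiplicity: the (unique) nondecreasing sequence s whose linear factors
   multiply to the characteristic polynomial.  (For a real symmetric matrix
   such a sequence exists.) *)
Definition eig_asc_seq (R : realType) (N : nat) (M : 'M[R]_N) : seq R :=
  xget [::] [set s : seq R | sorted <=%R s /\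
                             char_poly M = \prod_(a <- s) ('X - a%:P)].

(* [eig_asc M k] is the (k+1)-th smallest eigenvalue of M; so with the paper's
   descending indexing mu_N <= mu_{N-1} <= ..., mu_{N-1} = eig_asc M 1. *)
Definition eig_asc (R : realType) (N : nat) (M : 'M[R]_N) (k : nat) : R :=
  nth 0 (eig_asc_seq M) k.

Definition allone (R : realType) (n : nat) : 'M[R]_n := const_mx 1.

Definition Qp (R : realType) (n : nat) (Q1 : 'M[R]_n) (p : R) : 'M[R]_(n + n) :=
  let D := Q1 + (p * (n.-1)%:R)%:M in
  let B := p *: (allone R n - 1%:M) in
  block_mx D (- B) (- B) D.

Definition pstar (R : realType) (n : nat) (Q1 : 'M[R]_n) : R :=
  sup ([set 0] `|` [set p : R | 0 < p /\
                     eig_asc (Qp Q1 p) 1 = 2 * (n.-1)%:R * p])%classic.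

(* Main.v *)
Require Import Defs.
From HB Require Import structures.
From mathcomp Require Import all_boot all_order all_algebra.
From mathcomp Require Import boolp classical_sets reals.
From mathcomp Require Import ring lra.
Import Order.TTheory GRing.Theory Num.Theory.
Local Open Scope ring_scope.

Lemma char_polyE (R : fieldType) n (M : 'M[R]_n) x :
  (char_poly M).[x] = \det (x%:M - M).
Proof.
rewrite /char_poly -horner_evalE -det_map_mx; congr (\det _).
by apply/matrixP=> i j; rewrite !mxE /= horner_evalE hornerD hornerN hornerMn hornerX hornerC.
Qed.

Lemma poly_evalE (R : realType) (p q : {poly R}) :
  (forall x, p.[x] = q.[x]) -> p = q.
Proof.
move=> H; apply/eqP; rewrite -subr_eq0; apply/eqP.
apply: (@roots_geq_poly_eq0 _ _ [seq i%:R | i <- iota 0 (size (p - q))]).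
- by apply/allP => y _; rewrite /root hornerD hornerN H subrr.
- rewrite map_inj_uniq ?iota_uniq //; by move=> a b /eqP; rewrite eqr_nat => /eqP.
- by rewrite size_map size_iota.
Qed.
Lemma schur_block (R : fieldType) m (a : 'M[R]_1) (r : 'M[R]_(1, m)) (c : 'M[R]_(m, 1)) (D : 'M[R]_m) lam :
  block_mx a r c D *m (const_mx 1 : 'cV[R]_(1 + m)) = lam *: const_mx 1 ->
  block_mx 1 0 (- const_mx 1) 1 *m block_mx a r c D *m block_mx 1 0 (const_mx 1) 1
  = block_mx lam%:M r 0 (D - const_mx 1 *m r).
Proof.
have e1 : const_mx 1 = 1%:M :> 'M[R]_1 by apply/matrixP => i j; rewrite !mxE !ord1.
rewrite -[X in _ *m X = _]col_mx_const -[X in _ = _ *: X]col_mx_const.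
rewrite mul_block_col scale_col_mx e1; move/eq_col_mx => [h1 h2].
have h2' : c + D *m const_mx 1 = lam *: const_mx 1 by rewrite -h2 mulmx1.
have h1' : a + r *m const_mx 1 = lam%:M by rewrite -scalemx1 -h1 mulmx1.
rewrite -mulmxA mulmx_block !mulmx0 !mulmx1 !add0r h1' h2'.
rewrite mulmx_block !mul0mx !mul1mx !addr0 !mulNmx.
by rewrite mul_mx_scalar addNr addrC.
Qed.

Lemma schur_u (R : fieldType) m (M : 'M[R]_(1 + m)) lam :
  M *m (const_mx 1 : 'cV[R]_(1 + m)) = lam *: const_mx 1 ->
  forall x, \det (x%:M - M) =
    (x - lam) * \det (x%:M - (drsubmx M - const_mx 1 *m ursubmx M)).
Proof.
move=> hM x.
pose S : 'M[R]_(1 + m) := block_mx 1 0 (const_mx 1) 1.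
pose Si : 'M[R]_(1 + m) := block_mx 1 0 (- const_mx 1) 1.
have SiS : Si *m S = 1.
  rewrite mulmx_block !mulmx0 !mulmx1 !mul0mx !mul1mx !addr0 addNr.
  by rewrite add0r; symmetry; exact: (scalar_mx_block 1 m 1).
have dS : \det S = 1 by rewrite det_lblock !det1 mulr1.
have dSi : \det Si = 1 by rewrite det_lblock !det1 mulr1.
have key := @schur_block R m (ulsubmx M) (ursubmx M) (dlsubmx M) (drsubmx M) lam.
rewrite submxK in key; have {}key := key hM.
have -> : \det (x%:M - M) = \det (Si *m (x%:M - M) *m S).
  by rewrite !det_mulmx dS dSi mul1r mulr1.
rewrite mulmxBr mulmxBl mul_mx_scalar -scalemxAl SiS key scalemx1.
rewrite (scalar_mx_block 1 m x) opp_block_mx add_block_mx oppr0 addr0 det_ublock.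
have -> : x%:M - lam%:M = (x - lam)%:M :> 'M[R]_1 by rewrite raddfB.
by rewrite det_scalar1.

Qed.
Lemma det_sym_block (R : numFieldType) k (D Bm : 'M[R]_k) x :
  \det (x%:M - block_mx D (-Bm) (-Bm) D) =
  \det (x%:M - (D - Bm)) * \det (x%:M - (D + Bm)).
Proof.
pose T : 'M[R]_(k + k) := block_mx 1 1 1 (-1).
have TT : T *m T = 2%:M.
  rewrite mulmx_block !mulmx1 !mulmxN !mulmx1 opprK subrr.
  have e : (1 + 1 : 'M[R]_k) = 2%:M by rewrite -mulr2n -scaler_nat scalemx1.
  by rewrite (scalar_mx_block k k) e.
have dT : \det T != 0.
  have h2 : \det T * \det T = 2 ^+ (k + k) by rewrite -det_mulmx TT det_scalar.
  apply: contraTneq isT => h0; move: h2; rewrite h0 mul0r => /eqP.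
  by rewrite eq_sym expf_eq0 pnatr_eq0 andbF.
have key : (x%:M - block_mx D (-Bm) (-Bm) D) *m T =
           T *m block_mx (x%:M - (D - Bm)) 0 0 (x%:M - (D + Bm)).
  rewrite [x%:M]scalar_mx_block opp_block_mx add_block_mx !opprK.
  rewrite !mulmx_block !mulmx1 !mulmxN !mulmx1 !mul1mx !mulmx0 !addr0 !add0r ?mulNmx ?mul1mx ?oppr0 ?addr0 ?add0r.

  congr block_mx.
  - by rewrite opprD opprK addrA.
  - by rewrite opprD addrA.
  - by rewrite [LHS]addrC opprD opprK addrA.
  - by rewrite !opprB addrA (addrC Bm).
apply: (mulIf dT).
rewrite -det_mulmx key det_mulmx mulrC det_ublock //.
Qed.
Definition Bf (R : fieldType) m (M : 'M[R]_(1 + m)) : 'M[R]_m :=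
  drsubmx M - const_mx 1 *m ursubmx M.
Arguments Bf {R m}.

Lemma Bf_shift (R : fieldType) m (M : 'M[R]_(1 + m)) c a :
  Bf (M + c *: const_mx 1 + a%:M) = Bf M + a%:M.
Proof.
have hJ : (const_mx 1 : 'M[R]_(1 + m)) =
    block_mx (const_mx 1) (const_mx 1) (const_mx 1) (const_mx 1).
  by rewrite block_mxEv !row_mx_const col_mx_const.
rewrite /Bf -[M]submxK hJ (scalar_mx_block 1 m a) scale_block_mx !add_block_mx.
rewrite !block_mxKdr !block_mxKur addr0 mulmxDr -scalemxAr.
have -> : (const_mx 1 : 'M[R]_(m, 1)) *m (const_mx 1 : 'M[R]_(1, m)) = const_mx 1.
  by apply/matrixP => i j; rewrite !mxE big_ord1 !mxE mulr1.

by rewrite opprD addrAC addrACA subrr addr0.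
Qed.

Lemma u_shift (R : fieldType) m (M : 'M[R]_(1 + m)) c a :
  M *m (const_mx 1 : 'cV[R]_(1 + m)) = 0 ->
  (M + c *: const_mx 1 + a%:M) *m (const_mx 1 : 'cV[R]_(1 + m)) =
  (c * (1 + m)%:R + a) *: const_mx 1.
Proof.
move=> h; rewrite !mulmxDl h add0r mul_scalar_mx -scalemxAl scalerDl -scalerA.
congr (_ *: _ + _); apply/matrixP => i j; rewrite !mxE.
under eq_bigr do rewrite !mxE mulr1.
by rewrite sumr_const card_ord mulr1.
Qed.
Lemma second_min (R : realType) (l r : seq R) :
  sorted <=%R l -> perm_eq l (0 :: r) -> (forall y, y \in r -> 0 <= y) ->
  r != [::] ->
  nth 0 l 1 \in r /\ (forall y, y \in r -> nth 0 l 1 <= y).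
Proof.
case: l => [|x l'] hs hp hr hr0; first by have := perm_size hp.
have hmin : forall y, y \in x :: l' -> x <= y.
  move=> y; rewrite inE => /predU1P [->//|yl].
  by have /allP := order_path_min (@le_trans _ R) hs; apply.
have x0 : x = 0.
  apply/le_anti; rewrite hmin ?(perm_mem hp) ?mem_head //=.
  have : x \in 0 :: r by rewrite -(perm_mem hp) mem_head.
  by rewrite inE => /predU1P [->//|/hr].
subst x; rewrite perm_cons in hp.
case: l' hs hp hmin => [|y l''] hs hp hmin; first by move: hp; rewrite perm_sym => /perm_nilP hp; rewrite hp eqxx in hr0.
rewrite /=; split; first by rewrite -(perm_mem hp) mem_head.
move=> z zr; have hs' := path_sorted hs.
have : z \in y :: l'' by rewrite (perm_mem hp).
rewrite inE => /predU1P [->//|zl].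
by have /allP := order_path_min (@le_trans _ R) hs'; apply.
Qed.

Lemma split_dvd (R : realType) (P : {poly R}) (s : seq R) :
  P \is monic -> P %| \prod_(a <- s) ('X - a%:P) ->
  exists t, sorted <=%R t /\ P = \prod_(a <- t) ('X - a%:P).
Proof.
move=> mP /(@dvdp_prod_XsubC _ _ s id) [ms hm].
exists (sort <=%R (mask ms s)); split; first exact: (sort_sorted (@le_total _ R)).
rewrite (perm_big (mask ms s)); last by rewrite perm_sort.
by apply/eqP; rewrite -eqp_monic // monic_prod_XsubC.
Qed.

Lemma lap_sym (R : realType) (n : nat) (adj : rel 'I_n) (hsym : symmetric adj) i j :
  laplacian R adj i j = laplacian R adj j i.
Proof. by rewrite !mxE eq_sym hsym; case: eqP => // ->. Qed.

Lemma lap_rowsum (R : realType) (n : nat) (adj : rel 'I_n) (hirr : irreflexive adj) i (v : 'I_n -> R) :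
  \sum_j v j * laplacian R adj i j = v i * #|[set k | adj i k]|%:R - \sum_(j in [set k | adj i k]) v j.
Proof.
rewrite (bigD1 i) //= mxE eqxx; congr (_ + _).
rewrite -sumrN [LHS]big_mkcond [RHS]big_mkcond /=; apply: eq_bigr => j _.
rewrite mxE inE; case: eqVneq => [->|ji] /=; first by rewrite hirr ?oppr0.
by case: (adj i j); rewrite ?mulrN1 ?mulr0.
Qed.

Lemma lap_u (R : realType) (n : nat) (adj : rel 'I_n) (hirr : irreflexive adj) : laplacian R adj *m (const_mx 1 : 'cV[R]_n) = 0.
Proof.
apply/matrixP => i k; rewrite !mxE.
under eq_bigr do rewrite [const_mx 1 _ _]mxE mulr1.
rewrite (_ : \sum_j laplacian R adj i j = \sum_j (fun _ : 'I_n => (1:R)) j * laplacian R adj i j); last first.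
  by apply: eq_bigr => j _; rewrite mul1r.
by rewrite lap_rowsum // mul1r sumr_const subrr.
Qed.

Lemma lap_psd (R : realType) (n : nat) (adj : rel 'I_n) (hsym : symmetric adj) (hirr : irreflexive adj) lam :
  root (char_poly (laplacian R adj)) lam -> 0 <= lam.
Proof.
rewrite -eigenvalue_root_char => /eigenvalueP [v hv vn0].
have [i0 hi0] : exists i, v 0 i != 0.
  apply/existsP; apply: contraR vn0 => /existsPn h; apply/eqP/rowP => i.
  by rewrite mxE; apply/eqP; rewrite -[_ == _]negbK h.
have [j _ jmax'] := @Order.TotalTheory.arg_maxP _ R 'I_n i0 xpredT (fun j => `|v 0 j|) isT.
have {jmax'} jmax : forall i, `|v 0 i| <= `|v 0 j| by move=> i; exact: jmax'.
have vj : 0 < `|v 0 j| by apply: lt_le_trans (jmax i0); rewrite normr_gt0.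
have := congr1 (fun M : 'rV[R]_n => M 0 j) hv; rewrite !mxE.
under eq_bigr do rewrite lap_sym //.
rewrite lap_rowsum // => e.
set d := #|[set k | adj j k]|.
have hS : `|\sum_(i in [set k | adj j k]) v 0 i| <= `|v 0 j| * d%:R.
  apply: le_trans (ler_norm_sum _ _ _) _.
  apply: le_trans (ler_sum _ (fun i _ => jmax i)) _.
  by rewrite sumr_const mulr_natr.
have : `|lam - d%:R| * `|v 0 j| <= d%:R * `|v 0 j|.
  rewrite -normrM mulrBl -e mulrC [d%:R * _]mulrC.
  by rewrite addrAC subrr add0r normrN.
rewrite ler_pM2r // => /ler_normlP [h1 _].
by move: h1; rewrite opprB lerBlDr lerDl.
Qed.

Lemma char_shift (R : realType) k (B : 'M[R]_k) c x :
  (char_poly (B + c%:M)).[x] = (char_poly B).[x - c].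
Proof.
rewrite !char_polyE; congr (\det _).
have -> : (x - c)%:M = x%:M - c%:M :> 'M[R]_k by rewrite raddfB.
by rewrite opprD addrA addrAC.
Qed.

Lemma prod_shift (R : realType) (t : seq R) c x :
  (\prod_(a <- t) ('X - a%:P)).[x - c] =
  (\prod_(a <- map (fun y => y + c) t) ('X - a%:P)).[x].
Proof.
rewrite !horner_prod big_map; apply: eq_bigr => a _.
by rewrite !hornerXsubC opprD addrA addrAC.
Qed.

Lemma Qp_det (R : realType) m (Q : 'M[R]_(1 + m.+1)) p x :
  Q *m (const_mx 1 : 'cV[R]_(1 + m.+1)) = 0 ->
  \det (x%:M - Qp Q p) =
   (x * (char_poly (Bf Q + (p * (m.+2)%:R)%:M)).[x]) *
   ((x - 2 * (m.+1)%:R * p) * (char_poly (Bf Q + (p * m%:R)%:M)).[x]).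
Proof.
move=> hQ; rewrite /Qp det_sym_block.
set J := allone R _.
set B := p *: _; set D := Q + _.
rewrite (_ : D - B = Q + (-p) *: J + (p * (m.+2)%:R)%:M); last first.
  apply/matrixP => i j; rewrite !mxE; case: (i == j) => /=; ring.
rewrite (_ : D + B = Q + p *: J + (p * m%:R)%:M); last first.
  apply/matrixP => i j; rewrite !mxE; case: (i == j) => /=; ring.
rewrite (@schur_u _ _ _ _ (@u_shift R m.+1 Q (-p) (p * (m.+2)%:R) hQ)).
rewrite (@schur_u _ _ _ _ (@u_shift R m.+1 Q p (p * m%:R) hQ)).
rewrite -!/(Bf _) !Bf_shift !char_polyE.
have -> : - p * (1 + m.+1)%:R + p * m.+2%:R = 0 by ring.
have -> : p * (1 + m.+1)%:R + p * m%:R = 2 * m.+1%:R * p by ring.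
by rewrite subr0.
Qed.

Theorem mainTheorem5 (R : realType) (n : nat) (adj : rel 'I_n)
    (hn : (2 <= n)%N) (hsym : symmetric adj) (hirr : irreflexive adj) :
  pstar (laplacian R adj) = eig_asc (laplacian R adj) 1 / n%:R.
Proof.
case: n adj hn hsym hirr => [|[|m]] adj // _ hsym hirr.
set Q := laplacian R adj.
have hQ : Q *m (const_mx 1 : 'cV[R]_(1 + m.+1)) = 0 := @lap_u R _ adj hirr.
have hQ0 : Q *m (const_mx 1 : 'cV[R]_(1 + m.+1)) = 0 *: const_mx 1.
  by rewrite scale0r.
pose B := Bf (Q : 'M[R]_(1 + m.+1)).
have cQ : char_poly Q = 'X * char_poly B.
  apply: poly_evalE => x.
  by rewrite hornerM hornerX !char_polyE (@schur_u _ _ _ _ hQ0 x) subr0.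
have cQp : forall p, char_poly (Qp Q p) = 'X * char_poly (B + (p * (m.+2)%:R)%:M)
     * (('X - (2 * (m.+1)%:R * p)%:P) * char_poly (B + (p * m%:R)%:M)).
  move=> p; apply: poly_evalE => x.
  by rewrite char_polyE (@Qp_det R m Q p x hQ) !hornerM hornerX hornerXsubC.
have cB : forall t c, char_poly B = \prod_(a <- t) ('X - a%:P) ->
    char_poly (B + c%:M) = \prod_(a <- map (fun y => y + c) t) ('X - a%:P).
  move=> t c ct; apply: poly_evalE => x; by rewrite char_shift ct prod_shift.
have [[t [ts ct]] | nsplit] := pselect (exists t : seq R,
    sorted <=%R t /\ char_poly B = \prod_(a <- t) ('X - a%:P)); last first.
  have nQ : forall s : seq R, ~ (sorted <=%R s /\ char_poly Q = \prod_(a <- s) ('X - a%:P)).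
    move=> s [_ hs]; apply: nsplit; apply: (@split_dvd R _ s (char_poly_monic B)).
    by rewrite -hs cQ dvdp_mulIr.
  have eQ : eig_asc Q 1 = 0 by rewrite /eig_asc /eig_asc_seq xgetPN.
  have nP : forall p, eig_asc (Qp Q p) 1 = 0.
    move=> p; rewrite /eig_asc /eig_asc_seq xgetPN // => s [_ hs].
    set c := p * (m.+2)%:R.
    have hd : char_poly (B + c%:M) %| \prod_(a <- s) ('X - a%:P).
      by rewrite -hs cQp; apply: dvdp_trans (dvdp_mulIr 'X _) (dvdp_mulIl _ _).
    have [w [_ hw]] := @split_dvd R _ s (char_poly_monic (B + c%:M)) hd.
    apply: nsplit; exists (sort <=%R (map (fun y => y + - c) w)); split.
      exact: (sort_sorted (@le_total _ R)).
    rewrite (perm_big (map (fun y => y + - c) w)); last by rewrite perm_sort.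
    apply: poly_evalE => x.
    rewrite -[x in LHS](addrK c) -char_shift hw (_ : x + c = x - - c); last by rewrite opprK.
    by rewrite prod_shift.
  rewrite eQ mul0r /pstar.
  rewrite (_ : (_ `|` _)%classic = [set 0]%classic) ?sup1 //.
  apply/seteqP; split => q /=; last by left.
  case => // -[q0]; rewrite nP => h.
  have : 0 < 2 * (m.+1)%:R * q by rewrite !mulr_gt0 // ltr0Sn.
  by rewrite -h ltxx.
have t_ge0 : forall y, y \in t -> 0 <= y.
  move=> y yt; apply: (@lap_psd R _ adj hsym hirr).
  by rewrite cQ rootM ct root_prod_XsubC yt orbT.
have t_nil : t != [::].
  by have := size_char_poly B; rewrite ct size_prod_XsubC; case: t {ts ct t_ge0}.
have hsQ : sorted <=%R (eig_asc_seq Q) /\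
    char_poly Q = \prod_(a <- eig_asc_seq Q) ('X - a%:P).
  apply: (@xgetI _ [::] [set s : seq R | sorted <=%R s /\
                             char_poly Q = \prod_(a <- s) ('X - a%:P)] (0 :: t)).
  split.
    by case: t ts t_ge0 {ct t_nil} => //= a t' -> /(_ a (mem_head _ _)) ->.
  by rewrite cQ ct big_cons polyC0 subr0.
have pQ : perm_eq (eig_asc_seq Q) (0 :: t).
  by apply: prod_XsubC_eq; rewrite -hsQ.2 cQ ct big_cons polyC0 subr0.
have [eQt eQmin] := @second_min R _ _ hsQ.1 pQ t_ge0 t_nil.
rewrite -/(eig_asc Q 1) in eQt eQmin *.
set e := eig_asc Q 1 in eQt eQmin *.
have e0 : 0 <= e := t_ge0 _ eQt.
have key : forall p, 0 < p ->
    (eig_asc (Qp Q p) 1 = 2 * (m.+1)%:R * p <-> p * (m.+2)%:R <= e).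
  move=> p p0.
  set c1 := p * (m.+2)%:R; set c2 := p * m%:R; set a := 2 * (m.+1)%:R * p.
  have ea : a = c1 + c2 by rewrite /a /c1 /c2; ring.
  have c20 : 0 <= c2 by apply: mulr_ge0; [exact: ltW|exact: ler0n].
  have c21 : c2 <= c1.
    by rewrite /c1 /c2 ler_pM2l // ler_nat; apply: leq_trans (leqnSn _) (leqnSn _).
  set r := a :: (map (fun y => y + c1) t ++ map (fun y => y + c2) t).
  have cP : char_poly (Qp Q p) = \prod_(a <- 0 :: r) ('X - a%:P).
    rewrite cQp !(cB t) // !big_cons big_cat /= polyC0 subr0 -/c1 -/c2 -/a.
    by rewrite -[LHS]mulrA [X in _ * X]mulrCA.
  have hsP : sorted <=%R (eig_asc_seq (Qp Q p)) /\
      char_poly (Qp Q p) = \prod_(a <- eig_asc_seq (Qp Q p)) ('X - a%:P).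
    apply: (@xgetI _ [::] [set s : seq R | sorted <=%R s /\
        char_poly (Qp Q p) = \prod_(a <- s) ('X - a%:P)] (sort <=%R (0 :: r))).
    split; first exact: (sort_sorted (@le_total _ R)).
    by rewrite cP; apply: perm_big; rewrite perm_sym perm_sort.
  have pP : perm_eq (eig_asc_seq (Qp Q p)) (0 :: r).
    by apply: prod_XsubC_eq; rewrite -hsP.2 cP.
  have r_ge0 : forall y, y \in r -> 0 <= y.
    move=> y; rewrite inE mem_cat => /orP [/eqP ->|/orP [] /mapP [z zt ->]].
    - by rewrite ea addr_ge0 // (le_trans c20 c21).
    - by apply: addr_ge0; [exact: t_ge0|exact: le_trans c20 c21].
    - by apply: addr_ge0; [exact: t_ge0|exact: c20].
  have [fr fmin] := @second_min R _ _ hsP.1 pP r_ge0 isT.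
  rewrite -/(eig_asc (Qp Q p) 1) in fr fmin *.
  set f := eig_asc (Qp Q p) 1 in fr fmin *.
  split.
  - move=> hf; have := fmin (e + c2).
    rewrite hf inE mem_cat (map_f (fun y => y + c2) eQt) !orbT => /(_ isT).
    by rewrite ea lerD2r.
  - move=> hle; apply: le_anti; rewrite fmin ?mem_head //=.
    move: fr; rewrite inE mem_cat => /orP [/eqP ->//|/orP [] /mapP [z zt ->]].
    + rewrite ea addrC lerD //; exact: le_trans c21 (le_trans hle (eQmin _ zt)).
    + by rewrite ea lerD2r; exact: le_trans hle (eQmin _ zt).
have ub : ubound ([set 0] `|` [set p : R | 0 < p /\
                   eig_asc (Qp Q p) 1 = 2 * (m.+2).-1%:R * p])%classic (e / (m.+2)%:R).
  move=> q /= [->|[q0 /(key q q0) hq]]; first by rewrite divr_ge0.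
  by rewrite ler_pdivlMr.
have inS : ([set 0] `|` [set p : R | 0 < p /\
                   eig_asc (Qp Q p) 1 = 2 * (m.+2).-1%:R * p])%classic (e / (m.+2)%:R).
  have [->|en0] := eqVneq e 0; first by left; rewrite mul0r.
  right; have ep : 0 < e / (m.+2)%:R by rewrite divr_gt0 // lt_neqAle eq_sym en0 e0.
  split => //; apply/(key _ ep).
  by rewrite divfK // pnatr_eq0.
rewrite /pstar; apply: le_anti; apply/andP; split.
  apply: ge_sup ub; by exists 0; left.
apply: sup_upper_bound => //; split; first by exists 0; left.
by exists (e / (m.+2)%:R).
Qed.
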